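(* Let $G\le\operatorname{Homeo}(\mathfrak{C})$ be approximately full and vigorous. For $U,V\in K_{\mathfrak{C}}$ define $O_G(U)+O_G(V):=O_G(U\mu\cup V\nu)$, where $\mu,\nu\in G$ are any elements with $U\mu\cap V\nu=\varnothing$ and $U\mu\cup V\nu\neq\mathfrak{C}$. Then this operation on $\mathcal{O}(G)$ is well defined (independent of the choice of $\mu,\nu$ and of the representatives $U,V$), and $(\mathcal{O}(G),+)$ is an abelian group.
   Context: $\mathfrak{C}$ denotes a Cantor space (a space homeomorphic to $\{0,1\}^\omega$). Groups of homeomorphisms act on the right. $K_{\mathfrak{C}}$ denotes the set of non-empty proper clopen subsets of $\mathfrak{C}$. For $\gamma\in\operatorname{Homeo}(\mathfrak{C})$, $\operatorname{supp}(\gamma)=\{p\in\mathfrak{C}: p\gamma\neq p\}$. A subset $S\subseteq \operatorname{Homeo}(\mathfrak{C})$ is vigorous if for all clopen $A,B,C\subseteq\mathfrak{C}$ with $B,C$ non-empty proper subsets of $A$ there is $\gamma\in S$ with $\operatorname{supp}(\gamma)\subseteq A$ and $B\gamma\subseteq C$. $G$ is approximately full if whenever $\Gamma\subseteq G$ is finite, $\{D_\gamma\}_{\gamma\in\Gamma}$ is a partition of $\mathfrak{C}$ into clopen sets such that $\{D_\gamma\gamma\}_{\gamma\in\Gamma}$ is also a partition of $\mathfrak{C}$, and $\delta\in\Gamma$, there exists $\chi\in G$ with $\chi|_{D_\gamma}=\gamma|_{D_\gamma}$ for every $\gamma\in\Gamma\setminus\{\delta\}$. For $B\in K_{\mathfrak{C}}$,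 $O_G(B):=\{B\gamma:\gamma\in G\}$, and $\mathcal{O}(G):=\{O_G(B): B\in K_{\mathfrak{C}}\}$. *)

(* Defs.v *)
From HB Require Import structures.
From mathcomp Require Import all_boot all_order all_algebra.
From mathcomp Require Import all_classical all_reals all_analysis.
Set Implicit Arguments. Unset Strict Implicit. Unset Printing Implicit Defensive.
Local Open Scope classical_set_scope.

Notation CS := cantor_space.

(* Homeomorphisms of CS; they act on the right: B gamma := gamma @` B. *)
Definition is_homeo (f : CS -> CS) : Prop :=
  exists g : CS -> CS, [/\ continuous f, continuous g, cancel f g & cancel g f].

Definition homeo_subgroup (G : set (CS -> CS)) : Prop :=
  [/\ G `<=` is_homeo, G id,
      (forall f g, G f -> G g -> G (g \o f)) &
      (forall f, G f -> exists2 g, G g & cancel f g /\ cancel g f)].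

Definition supp (g : CS -> CS) : set CS := [set p | g p <> p].

Definition KC : set (set CS) := [set A | clopen A /\ A !=set0 /\ A <> setT].

Definition vigorous (S : set (CS -> CS)) : Prop :=
  forall A B C : set CS, clopen A -> clopen B -> clopen C ->
    B !=set0 -> C !=set0 -> B `<` A -> C `<` A ->
    exists2 g, S g & supp g `<=` A /\ g @` B `<=` C.

Definition clopen_partition (n : nat) (D : 'I_n -> set CS) : Prop :=
  [/\ (forall i, clopen (D i)), (forall i, D i !=set0),
      (forall i j, i != j -> D i `&` D j = set0) &
      (forall p, exists i, D i p)].

(* Gamma = {gam i | i < n} is a finite subset of G listed without repetition,
   D is indexed by Gamma; delta = gam k. *)
Definition approximately_full (G : set (CS -> CS)) : Prop :=
  forall (n : nat) (gam : 'I_n -> (CS -> CS)) (D : 'I_n -> set CS) (k : 'I_n),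
    (forall i, G (gam i)) -> injective gam ->
    clopen_partition D -> clopen_partition (fun i => gam i @` D i) ->
    exists2 chi, G chi &
      forall i, i != k -> forall p, D i p -> chi p = gam i p.

Definition OG (G : set (CS -> CS)) (B : set CS) : set (set CS) :=
  [set g @` B | g in G].
Definition OrbG (G : set (CS -> CS)) : set (set (set CS)) :=
  [set OG G B | B in KC].

Definition admissible (G : set (CS -> CS)) (U V : set CS) (mu nu : CS -> CS) :=
  [/\ G mu, G nu, mu @` U `&` nu @` V = set0 & mu @` U `|` nu @` V <> setT].

(* Main.v *)
Require Import Defs.
From HB Require Import structures.
From mathcomp Require Import all_boot all_order all_algebra.
From mathcomp Require Import all_classical all_reals all_analysis.
Local Open Scope classical_set_scope.
Set Implicit Arguments. Unset Strict Implicit.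

Lemma homeo_image_pre (f : cantor_space -> cantor_space) g (X : set cantor_space) :
  cancel f g -> cancel g f -> f @` X = g @^-1` X.
Proof.
move=> fg gf; apply/seteqP; split => x /=.
  by case=> y Xy <-; rewrite fg.
by move=> Xgx; exists (g x) => //; rewrite gf.
Qed.

Lemma homeo_clopen (f : cantor_space -> cantor_space) (X : set cantor_space) :
  is_homeo f -> clopen X -> clopen (f @` X).
Proof.
case=> g [cf cg fg gf] [oX cX]; rewrite (@homeo_image_pre f g X fg gf); split.
  by move/continuousP: cg; apply.
by move/continuous_closedP: cg; apply.
Qed.

Lemma homeo_inj (f : cantor_space -> cantor_space) : is_homeo f -> injective f.
Proof. by case=> g [_ _ fg _]; apply: can_inj fg. Qed.

Lemma image_disj (f : cantor_space -> cantor_space) (A B : set cantor_space) :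
  injective f -> A `&` B = set0 -> f @` A `&` f @` B = set0.
Proof.
move=> fi AB; apply/seteqP; split => // x [[a Aa <-] [b Bb]] /fi ab.
have : (A `&` B) a by split => //; rewrite -ab.
by rewrite AB.
Qed.

Lemma image_ne (f : cantor_space -> cantor_space) (A : set cantor_space) :
  A !=set0 -> f @` A !=set0.
Proof. by case=> a Aa; exists (f a); exists a. Qed.

Lemma split_clopen (S : set cantor_space) : clopen S -> S !=set0 ->
  exists S1, [/\ clopen S1, S1 `<=` S, S1 !=set0 & S `&` ~` S1 !=set0].
Proof.
move=> [oS cS] [p Sp].
have [_ lp] := cantor_perfect.
have : limit_point [set: cantor_space] p by rewrite lp.
move=> /(_ S) []; first by apply: open_nbhs_nbhs.
move=> y [ynp _ Sy].
have pny : p != y by rewrite eq_sym.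
have [U [cU Up nUy]] := cantor_zero_dimensional pny.
exists (S `&` U); split.
- by apply: clopenI.
- by move=> x [].
- by exists p.
- by exists y; split => // -[].
Qed.

Definition sim (G : set (cantor_space -> cantor_space)) (X Y : set cantor_space) :=
  exists2 g, G g & g @` X = Y.

Lemma image_cancel (f g : cantor_space -> cantor_space) (X : set cantor_space) :
  cancel f g -> g @` (f @` X) = X.
Proof.
move=> fg; apply/seteqP; split => x.
  by case=> _ [y Xy <-] <-; rewrite fg.
by move=> Xx; exists (f x); [exists x|rewrite fg].
Qed.

Lemma sim_refl G X : homeo_subgroup G -> sim G X X.
Proof. by case=> _ hid _ _; exists id => //; rewrite image_id. Qed.

Lemma sim_sym G X Y : homeo_subgroup G -> sim G X Y -> sim G Y X.
Proof.
case=> _ _ _ hinv [g Gg <-]; have [h Gh [gh hg]] := hinv g Gg.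
by exists h => //; apply: image_cancel.
Qed.

Lemma sim_trans G X Y Z : homeo_subgroup G -> sim G X Y -> sim G Y Z -> sim G X Z.
Proof.
case=> _ _ hcomp _ [g Gg <-] [h Gh <-].
by exists (h \o g); [apply: hcomp|rewrite image_comp].
Qed.

Lemma sim_img G X g : homeo_subgroup G -> G g -> sim G X (g @` X).
Proof. by move=> _ Gg; exists g. Qed.

Lemma OG_sim G X Y : homeo_subgroup G -> sim G X Y -> OG G X = OG G Y.
Proof.
move=> hG hXY; apply/seteqP; split => Z HZ.
  by case: (sim_trans hG (sim_sym hG hXY) HZ) => g Gg e; exists g.
by case: (sim_trans hG hXY HZ) => g Gg e; exists g.
Qed.

Lemma supp_out (h : cantor_space -> cantor_space) (S : set cantor_space) p :
  supp h `<=` S -> ~ S p -> h p = p.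
Proof. by move=> hS nSp; apply: contrapT => /hS. Qed.

Lemma supp_pres (h : cantor_space -> cantor_space) (S : set cantor_space) :
  is_homeo h -> supp h `<=` S -> h @` S = S.
Proof.
move=> [g [_ _ hg gh]] hS; apply/seteqP; split => x.
  case=> y Sy <-; apply: contrapT => nS.
  have e : h (h y) = h y by apply: supp_out nS.
  have /(can_inj hg) e' := e.
  by apply: nS; rewrite e'.
move=> Sx; exists (g x); last by rewrite gh.
apply: contrapT => nS.
have e : h (g x) = g x by apply: supp_out nS.
by apply: nS; rewrite -e gh.
Qed.

Lemma nontriv G (S : set cantor_space) : homeo_subgroup G -> vigorous G ->
  clopen S -> S !=set0 ->
  exists2 h, G h & supp h `<=` S /\ exists2 p, S p & h p <> p.
Proof.
move=> hG hV cS neS.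
have [S1 [cS1 S1S neS1 neS2]] := split_clopen cS neS.
have cS2 : clopen (S `&` ~` S1) by apply: clopenI => //; apply: clopenC.
have [h Gh [hsupp himg]] := hV S S1 (S `&` ~` S1) cS cS1 cS2 neS1 neS2
  (conj S1S (fun sub => let: ex_intro x (conj Sx nx) := neS2 in nx (sub x Sx)))
  (conj (fun x => @proj1 _ _) (fun sub => let: ex_intro x S1x := neS1 in
       proj2 (sub x (S1S x S1x)) S1x)).
exists h => //; split => //.
case: neS1 => p S1p; exists p; first exact: S1S.
move=> e; have : (S `&` ~` S1) (h p) by apply: himg; exists p.
by rewrite e => -[].
Qed.

Definition part3 (D0 D1 D2 : set cantor_space) :=
  [/\ clopen D0 /\ clopen D1 /\ clopen D2,
      D0 !=set0 /\ D1 !=set0 /\ D2 !=set0,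
      D0 `&` D1 = set0 /\ D0 `&` D2 = set0 /\ D1 `&` D2 = set0 &
      forall p, D0 p \/ D1 p \/ D2 p].

Lemma part3_clopen D0 D1 D2 : part3 D0 D1 D2 ->
  clopen_partition (fun i : 'I_3 => nth set0 [:: D0; D1; D2] i).
Proof.
case=> [[c0 [c1 c2]] [n0 [n1 n2]] [d01 [d02 d12]] cov]; split.
- by case=> [[|[|[|m]]] Hi].
- by case=> [[|[|[|m]]] Hi].
- case=> [[|[|[|m]]] Hi] // [[|[|[|n]]] Hj] //= _;
    by rewrite ?d01 ?d02 ?d12 // setIC ?d01 ?d02 ?d12.
- move=> p; case: (cov p) => [h|[h|h]].
  + by exists (Ordinal (isT : 0 < 3)).
  + by exists (Ordinal (isT : 1 < 3)).
  + by exists (Ordinal (isT : 2 < 3)).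
Qed.

Lemma AF3_distinct G (D0 D1 D2 : set cantor_space) g0 g1 g2 :
  approximately_full G -> G g0 -> G g1 -> G g2 ->
  g0 <> g1 -> g0 <> g2 -> g1 <> g2 ->
  part3 D0 D1 D2 -> part3 (g0 @` D0) (g1 @` D1) (g2 @` D2) ->
  exists2 chi, G chi &
    (forall p, D0 p -> chi p = g0 p) /\ (forall p, D1 p -> chi p = g1 p).
Proof.
move=> hAF G0 G1 G2 n01 n02 n12 P1 P2.
pose gam (i : 'I_3) := nth g0 [:: g0; g1; g2] i.
pose D (i : 'I_3) := nth set0 [:: D0; D1; D2] i.
have := hAF 3 gam D (Ordinal (isT : 2 < 3)).
case.
- by case=> [[|[|[|m]]] Hi].
- case=> [[|[|[|m]]] Hi] // [[|[|[|n]]] Hj] //= e; try (by apply/val_inj);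
    exfalso; by [apply: n01|apply: n02|apply: n12].
- exact: part3_clopen.
- have -> : (fun i => gam i @` D i) =
     (fun i : 'I_3 => nth set0 [:: g0 @` D0; g1 @` D1; g2 @` D2] i).
    by apply: funext => -[[|[|[|m]]] Hi].
  exact: part3_clopen.
move=> chi Gchi H; exists chi => //; split.
- exact: (H (Ordinal (isT : 0 < 3))).
- exact: (H (Ordinal (isT : 1 < 3))).
Qed.

Lemma AF3 G (D0 D1 D2 : set cantor_space) g0 g1 g2 :
  homeo_subgroup G -> approximately_full G -> vigorous G ->
  G g0 -> G g1 -> G g2 ->
  part3 D0 D1 D2 -> part3 (g0 @` D0) (g1 @` D1) (g2 @` D2) ->
  exists2 chi, G chi &
    (forall p, D0 p -> chi p = g0 p) /\ (forall p, D1 p -> chi p = g1 p).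
Proof.
move=> hG hAF hV G0 G1 G2 P1 P2.
have [hH _ hcomp _] := hG.
case: (pselect (g0 = g1)) => [e01|n01].
  by exists g0 => //; split => // p _; rewrite e01.
have nS0 : forall p, D0 p -> ~ (g2 @` D2) (g0 p).
  move=> p D0p S; case: P2 => _ _ [_ [d02 _]] _.
  have : (g0 @` D0 `&` g2 @` D2) (g0 p) by split => //; exists p.
  by rewrite d02.
have nS1 : forall p, D1 p -> ~ (g2 @` D2) (g1 p).
  move=> p D1p S; case: P2 => _ _ [_ [_ d12]] _.
  have : (g1 @` D1 `&` g2 @` D2) (g1 p) by split => //; exists p.
  by rewrite d12.
have hkey : g2 = g0 \/ g2 = g1 -> exists2 chi, G chi &
    (forall p, D0 p -> chi p = g0 p) /\ (forall p, D1 p -> chi p = g1 p).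
  move=> e2.
  have cS : clopen (g2 @` D2).
    by apply: homeo_clopen; [exact: hH|case: P1 => [[_ [_ c2]] _ _ _]].
  have nS : g2 @` D2 !=set0 by apply: image_ne; case: P1 => _ [_ [_ n2]] _ _.
  have [h Gh [hsupp [q Sq hq]]] := nontriv hG hV cS nS.
  have G2' : G (h \o g2) by apply: hcomp.
  have img : (h \o g2) @` D2 = g2 @` D2.
    by rewrite -image_comp; apply: supp_pres => //; apply: hH.
  have n22 : h \o g2 <> g2.
    move=> e; case: Sq hq => r D2r <- hq; apply: hq.
    exact: (congr1 (fun f => f r) e).
  case: (pselect (h \o g2 = g0)) => [e0|n0].
    exists g0 => //; split => // p D1p.
    have e21 : g2 = g1 by case: e2 => // e; exfalso; apply: n22; rewrite e0 e.
    by rewrite -e0 /= e21 (supp_out hsupp (nS1 p D1p)).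
  case: (pselect (h \o g2 = g1)) => [e1|n1].
    exists g1 => //; split => // p D0p.
    have e20 : g2 = g0 by case: e2 => // e; exfalso; apply: n22; rewrite e1 e.
    by rewrite -e1 /= e20 (supp_out hsupp (nS0 p D0p)).
  apply: (@AF3_distinct G D0 D1 D2 g0 g1 (h \o g2)) => //.
  all: try by rewrite img.
    exact: (fun e => n0 (esym e)).
    exact: (fun e => n1 (esym e)).
case: (pselect (g2 = g0)) => [e20|n20]; first by apply: hkey; left.
case: (pselect (g2 = g1)) => [e21|n21]; first by apply: hkey; right.
apply: (@AF3_distinct G D0 D1 D2 g0 g1 g2) => //.
  exact: (fun e => n20 (esym e)).
exact: (fun e => n21 (esym e)).
Qed.

Lemma clopenU2 (X Y : set cantor_space) : clopen X -> clopen Y -> clopen (X `|` Y).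
Proof. exact: clopenU. Qed.
Lemma clopenC2 (X : set cantor_space) : clopen X -> clopen (~` X).
Proof. exact: (@clopenC _ X set0). Qed.
Lemma clopenI2 (X Y : set cantor_space) : clopen X -> clopen Y -> clopen (X `&` Y).
Proof. exact: clopenI. Qed.

Lemma setC_ne (X : set cantor_space) : X <> setT -> ~` X !=set0.
Proof.
move=> nX; apply: contrapT => H; apply: nX; apply/seteqP; split => // x _.
by apply: contrapT => nx; apply: H; exists x.
Qed.

Lemma part3_mk (X Z : set cantor_space) : clopen X -> clopen Z ->
  X !=set0 -> Z !=set0 -> X `&` Z = set0 -> X `|` Z <> setT ->
  part3 X (~` (X `|` Z)) Z.
Proof.
move=> cX cZ nX nZ dXZ nU; split.
- by split => //; split => //; exact: clopenC2 (clopenU2 cX cZ).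
- by split => //; split => //; apply: setC_ne.
- split; [|split => //].
  + by apply/seteqP; split => // x [Xx /= H]; apply: H; left.
  + by apply/seteqP; split => // x [/= H Zx]; apply: H; right.
- move=> p; case: (pselect (X p)) => Xp; first by left.
  case: (pselect (Z p)) => Zp; first by right; right.
  by right; left => -[].
Qed.

Lemma move1 G (A : set cantor_space) alpha :
  homeo_subgroup G -> approximately_full G -> vigorous G -> G alpha ->
  clopen A -> A !=set0 -> A `&` alpha @` A = set0 -> A `|` alpha @` A <> setT ->
  exists2 chi, G chi & (forall p, A p -> chi p = alpha p) /\
     (forall p, ~ (A `|` alpha @` A) p -> chi p = p).
Proof.
move=> hG hAF hV Ga cA nA dA nU.
have [hH hid _ hinv] := hG.
have [beta Gb [ab ba]] := hinv alpha Ga.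
have cA' : clopen (alpha @` A) by apply: homeo_clopen => //; apply: hH.
have nA' : alpha @` A !=set0 by apply: image_ne.
have P1 := part3_mk cA cA' nA nA' dA nU.
have P2 : part3 (alpha @` A) (id @` (~` (A `|` alpha @` A))) (beta @` (alpha @` A)).
  rewrite image_id image_cancel // [A `|` _]setUC.
  apply: part3_mk => //; first by rewrite setIC.
  by rewrite setUC.
have [chi Gc [h0 h1]] := @AF3 G A (~` (A `|` alpha @` A)) (alpha @` A) alpha id beta hG hAF hV Ga hid Gb P1 P2.
by exists chi.
Qed.

Lemma image_eq_on (f g : cantor_space -> cantor_space) (A : set cantor_space) :
  (forall p, A p -> f p = g p) -> f @` A = g @` A.
Proof.
move=> e; apply/seteqP; split => x [y Ay <-]; exists y => //; by rewrite e.
Qed.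

Lemma sim_move G (A B : set cantor_space) alpha :
  homeo_subgroup G -> approximately_full G -> vigorous G -> G alpha ->
  clopen A -> A !=set0 -> A `&` alpha @` A = set0 -> A `|` alpha @` A <> setT ->
  B `<=` ~` (A `|` alpha @` A) ->
  sim G (A `|` B) (alpha @` A `|` B).
Proof.
move=> hG hAF hV Ga cA nA dA nU sB.
have [chi Gc [h0 h1]] := move1 hG hAF hV Ga cA nA dA nU.
exists chi => //; rewrite image_setU (image_eq_on h0); congr (_ `|` _).
rewrite (@image_eq_on chi id B); first by rewrite image_id.
by move=> p Bp; apply: h1; apply: sB.
Qed.

Lemma four_split : exists T1 T2 T3 : set cantor_space,
  [/\ clopen T1 /\ clopen T2 /\ clopen T3,
      T1 !=set0 /\ T2 !=set0 /\ T3 !=set0,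
      T1 `&` T2 = set0 /\ T1 `&` T3 = set0 /\ T2 `&` T3 = set0 &
      exists r, ~ T1 r /\ ~ T2 r /\ ~ T3 r].
Proof.
have [T1 [c1 _ n1 n1']] := split_clopen (@clopenT cantor_space)
  (ex_intro _ (fun _ => true) I).
have cR1 : clopen (setT `&` ~` T1) by apply: clopenI2 => //; [exact: clopenT|exact: clopenC2].
have [T2 [c2 s2 n2 n2']] := split_clopen cR1 n1'.
have cR2 : clopen ((setT `&` ~` T1) `&` ~` T2) by apply: clopenI2 => //; exact: clopenC2.
have [T3 [c3 s3 n3 [r [[[_ r1] r2] r3]]]] := split_clopen cR2 n2'.
exists T1, T2, T3; split => //.
split; [|split].
- by apply/seteqP; split => // x [x1 /s2 [_ x2]].
- by apply/seteqP; split => // x [x1 /s3 [[_ x2] _]].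
- by apply/seteqP; split => // x [x1 /s3 [_ x2]].
by exists r.
Qed.

Lemma properT (X : set cantor_space) : X <> setT -> X `<` setT.
Proof. by move=> nX; split => // sub; apply: nX; apply/seteqP; split. Qed.

Lemma shrink G (X T : set cantor_space) : vigorous G -> KC X -> clopen T ->
  T !=set0 -> T <> setT -> exists2 g, G g & g @` X `<=` T.
Proof.
move=> hV [cX [nX tX]] cT nT tT.
have [g Gg [_ sub]] := hV setT X T (@clopenT _) cX cT nX nT (properT tX) (properT tT).
by exists g.
Qed.

Lemma sim_KC G (X Y : set cantor_space) : homeo_subgroup G -> KC X -> sim G X Y -> KC Y.
Proof.
move=> [hH _ _ hinv] [cX [nX tX]] [g Gg <-].
split; first by apply: homeo_clopen => //; apply: hH.
split; first exact: image_ne.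
move=> e; apply: tX; have [h Gh [gh hg]] := hinv g Gg.
rewrite -(@image_cancel g h X gh) e; apply/seteqP; split => // x _.
by exists (g x) => //.
Qed.

Lemma KC_U (X Y : set cantor_space) : KC X -> clopen Y -> X `|` Y <> setT ->
  KC (X `|` Y).
Proof.
move=> [cX [[x Xx] _]] cY nU; split; first exact: clopenU2.
by split => //; exists x; left.
Qed.

Lemma disj_sub (X Y T1 T2 : set cantor_space) :
  X `<=` T1 -> Y `<=` T2 -> T1 `&` T2 = set0 -> X `&` Y = set0.
Proof.
move=> sX sY d; apply/seteqP; split => // x [/sX x1 /sY x2].
by have : (T1 `&` T2) x by []; rewrite d.
Qed.

Lemma W_lemma G (A B A' B' : set cantor_space) :
  homeo_subgroup G -> approximately_full G -> vigorous G ->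
  KC A -> KC B -> A `&` B = set0 -> A `|` B <> setT ->
  sim G A A' -> sim G B B' -> A' `&` B' = set0 -> A' `|` B' <> setT ->
  sim G (A `|` B) (A' `|` B').
Proof.
move=> hG hAF hV KA KB dAB nAB sAA sBB dAB' nAB'.
have [hH _ _ _] := hG.
have KA' := sim_KC hG KA sAA.
have KB' := sim_KC hG KB sBB.
have [T1 [T2 [T3 [[c1 [c2 c3]] [n1 [n2 n3]] [d12 [d13 d23]] [r [r1 [r2 r3]]]]]]] := four_split.
have t1 : T1 <> setT by move=> e; apply: r1; rewrite e.
have t2 : T2 <> setT by move=> e; apply: r2; rewrite e.
have KU : KC (A `|` B) by apply: KC_U => //; case: KB.
have KU' : KC (A' `|` B') by apply: KC_U => //; case: KB'.
have [g Gg sg] := shrink hV KU c1 n1 t1.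
have [g' Gg' sg'] := shrink hV KU' c2 n2 t2.
rewrite image_setU in sg; rewrite image_setU in sg'.
set A1 := g @` A in sg *; set B1 := g @` B in sg *.
set A2 := g' @` A' in sg' *; set B2 := g' @` B' in sg' *.
have sA1 : A1 `<=` T1 by move=> x Hx; apply: sg; left.
have sB1 : B1 `<=` T1 by move=> x Hx; apply: sg; right.
have sA2 : A2 `<=` T2 by move=> x Hx; apply: sg'; left.
have sB2 : B2 `<=` T2 by move=> x Hx; apply: sg'; right.
have dA1B1 : A1 `&` B1 = set0 by apply: image_disj => //; apply: homeo_inj; apply: hH.
have dA2B2 : A2 `&` B2 = set0 by apply: image_disj => //; apply: homeo_inj; apply: hH.
have simA : sim G A1 A2.
  apply: (sim_trans hG (sim_sym hG (sim_img A hG Gg))).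
  exact: (sim_trans hG sAA (sim_img A' hG Gg')).
have simB : sim G B1 B2.
  apply: (sim_trans hG (sim_sym hG (sim_img B hG Gg))).
  exact: (sim_trans hG sBB (sim_img B' hG Gg')).
have KA1 : KC A1 := sim_KC hG KA (sim_img A hG Gg).
have KB1 : KC B1 := sim_KC hG KB (sim_img B hG Gg).
have nr : forall X Y, X `<=` T1 -> Y `<=` T2 -> X `|` Y <> setT.
  move=> X Y sX sY e.
  have : (X `|` Y) r by rewrite e.
  by case=> [/sX|/sY].
have step1 : sim G (A1 `|` B1) (A2 `|` B1).
  case: simA => alpha Ga ea; rewrite -ea.
  case: KA1 => cA1 [nA1 _].
  apply: sim_move => //.
  - by rewrite ea; exact: disj_sub sA1 sA2 d12.
  - by rewrite ea; apply: nr.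
  - rewrite ea => x B1x [A1x|A2x].
    + have H : (A1 `&` B1) x by [].
      by rewrite dA1B1 in H.
    + have H : (T1 `&` T2) x by split; [apply: sB1|apply: sA2].
      by rewrite d12 in H.
have step2 : sim G (B1 `|` A2) (B2 `|` A2).
  case: simB => beta Gb eb; rewrite -eb.
  case: KB1 => cB1 [nB1 _].
  apply: sim_move => //.
  - by rewrite eb; exact: disj_sub sB1 sB2 d12.
  - by rewrite eb; apply: nr.
  - rewrite eb => x A2x [B1x|B2x].
    + have H : (T1 `&` T2) x by split; [apply: sB1|apply: sA2].
      by rewrite d12 in H.
    + have H : (A2 `&` B2) x by [].
      by rewrite dA2B2 in H.
apply: (sim_trans hG _ (sim_trans hG step1 _)).
  by exists g => //; rewrite image_setU.
rewrite setUC; apply: (sim_trans hG step2); rewrite setUC.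
apply: sim_sym => //; exists g' => //; by rewrite image_setU.
Qed.

Definition addO (G : set (cantor_space -> cantor_space)) (x y : set (set cantor_space)) :
  set (set cantor_space) :=
  [set W | exists U V mu nu, [/\ KC U, KC V, x = OG G U, y = OG G V &
     admissible G U V mu nu /\ OG G (mu @` U `|` nu @` V) W]].

Lemma disjP (X Y : set cantor_space) : (forall x, X x -> Y x -> False) -> X `&` Y = set0.
Proof. by move=> H; apply/seteqP; split => // x [] /H. Qed.

Lemma OG_eq_sim G (U U1 : set cantor_space) : homeo_subgroup G ->
  OG G U = OG G U1 -> sim G U1 U.
Proof.
move=> hG e; have : OG G U U by case: (sim_refl U hG) => g Gg eg; exists g.
by rewrite e; case=> g Gg eg; exists g.
Qed.

Lemma adm_exists G (U V : set cantor_space) : vigorous G -> KC U -> KC V ->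
  exists mu nu, admissible G U V mu nu.
Proof.
move=> hV KU KV.
have [T1 [T2 [T3 [[c1 [c2 c3]] [n1 [n2 n3]] [d12 [d13 d23]] [r [r1 [r2 r3]]]]]]] := four_split.
have t1 : T1 <> setT by move=> e; apply: r1; rewrite e.
have t2 : T2 <> setT by move=> e; apply: r2; rewrite e.
have [mu Gm sm] := shrink hV KU c1 n1 t1.
have [nu Gn sn] := shrink hV KV c2 n2 t2.
exists mu, nu; split => //; first exact: disj_sub sm sn d12.
move=> e; have : (mu @` U `|` nu @` V) r by rewrite e.
by case=> [/sm|/sn].
Qed.

Lemma addE G (U V : set cantor_space) mu nu :
  homeo_subgroup G -> approximately_full G -> vigorous G ->
  KC U -> KC V -> admissible G U V mu nu ->
  addO G (OG G U) (OG G V) = OG G (mu @` U `|` nu @` V).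
Proof.
move=> hG hAF hV KU KV adm; apply/seteqP; split; last first.
  by move=> W HW; exists U, V, mu, nu.
move=> W [U1 [V1 [mu1 [nu1 [KU1 KV1 e1 e2 [adm1 HW]]]]]].
suff -> : OG G (mu @` U `|` nu @` V) = OG G (mu1 @` U1 `|` nu1 @` V1) by [].
case: adm => Gm Gn d n; case: adm1 => Gm1 Gn1 d1 n1.
apply: OG_sim => //; apply: W_lemma => //.
- exact: sim_KC hG KU (sim_img U hG Gm).
- exact: sim_KC hG KV (sim_img V hG Gn).
- apply: (sim_trans hG (sim_sym hG (sim_img U hG Gm))).
  apply: (sim_trans hG (OG_eq_sim hG (esym e1))).
  exact: sim_img.
- apply: (sim_trans hG (sim_sym hG (sim_img V hG Gn))).
  apply: (sim_trans hG (OG_eq_sim hG (esym e2))).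
  exact: sim_img.
Qed.

Lemma addE_id G (A B : set cantor_space) :
  homeo_subgroup G -> approximately_full G -> vigorous G ->
  KC A -> KC B -> A `&` B = set0 -> A `|` B <> setT ->
  addO G (OG G A) (OG G B) = OG G (A `|` B).
Proof.
move=> hG hAF hV KA KB d n; have [_ hid _ _] := hG.
have adm : admissible G A B id id by split => //; rewrite !image_id.
by rewrite (addE hG hAF hV KA KB adm) !image_id.
Qed.

Lemma add_closed G x y : homeo_subgroup G -> approximately_full G -> vigorous G ->
  OrbG G x -> OrbG G y -> OrbG G (addO G x y).
Proof.
move=> hG hAF hV [U KU <-] [V KV <-].
have [mu [nu adm]] := adm_exists hV KU KV.
rewrite (addE hG hAF hV KU KV adm).
exists (mu @` U `|` nu @` V) => //.
case: adm => Gm Gn d n; apply: KC_U => //.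
- exact: sim_KC hG KU (sim_img U hG Gm).
- by case: (sim_KC hG KV (sim_img V hG Gn)).
Qed.

Lemma add_comm G x y : homeo_subgroup G -> approximately_full G -> vigorous G ->
  OrbG G x -> OrbG G y -> addO G x y = addO G y x.
Proof.
move=> hG hAF hV [U KU <-] [V KV <-].
have [mu [nu adm]] := adm_exists hV KU KV.
have adm' : admissible G V U nu mu.
  case: adm => Gm Gn d n; split => //; first by rewrite setIC.
  by rewrite setUC.
by rewrite (addE hG hAF hV KU KV adm) (addE hG hAF hV KV KU adm') setUC.
Qed.

Lemma add_assoc G x y z : homeo_subgroup G -> approximately_full G -> vigorous G ->
  OrbG G x -> OrbG G y -> OrbG G z -> addO G (addO G x y) z = addO G x (addO G y z).
Proof.
move=> hG hAF hV [U KU <-] [V KV <-] [W KW <-].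
have [T1 [T2 [T3 [[c1 [c2 c3]] [n1 [n2 n3]] [d12 [d13 d23]] [r [r1 [r2 r3]]]]]]] := four_split.
have t1 : T1 <> setT by move=> e; apply: r1; rewrite e.
have t2 : T2 <> setT by move=> e; apply: r2; rewrite e.
have t3 : T3 <> setT by move=> e; apply: r3; rewrite e.
have [g1 G1 s1] := shrink hV KU c1 n1 t1.
have [g2 G2 s2] := shrink hV KV c2 n2 t2.
have [g3 G3 s3] := shrink hV KW c3 n3 t3.
rewrite (OG_sim hG (sim_img U hG G1)) (OG_sim hG (sim_img V hG G2)).
rewrite (OG_sim hG (sim_img W hG G3)).
have K1 := sim_KC hG KU (sim_img U hG G1).
have K2 := sim_KC hG KV (sim_img V hG G2).
have K3 := sim_KC hG KW (sim_img W hG G3).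
set U' := g1 @` U in s1 K1 *; set V' := g2 @` V in s2 K2 *.
set W' := g3 @` W in s3 K3 *.
have nrT : forall X : set cantor_space, ~ X r -> X <> setT.
  by move=> X nX e; apply: nX; rewrite e.
have cV : clopen V' by case: K2.
have cW : clopen W' by case: K3.
have dUV : U' `&` V' = set0 by exact: disj_sub s1 s2 d12.
have dVW : V' `&` W' = set0 by exact: disj_sub s2 s3 d23.
rewrite (addE_id hG hAF hV K1 K2 dUV); last first.
  by apply: nrT => -[/s1|/s2].
rewrite (addE_id hG hAF hV K2 K3 dVW); last first.
  by apply: nrT => -[/s2|/s3].
rewrite (addE_id hG hAF hV); first last.
- by apply: nrT => -[[/s1|/s2]|/s3].
- by apply: disjP => p [/s1 a|/s2 a] /s3 b;
    [have H : (T1 `&` T3) p by []|have H : (T2 `&` T3) p by []];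
    rewrite ?d13 ?d23 in H.
- exact: K3.
- by apply: KC_U => //; apply: nrT => -[/s1|/s2].
rewrite (addE_id hG hAF hV); first last.
- by apply: nrT => -[/s1|[/s2|/s3]].
- by apply: disjP => p /s1 a [/s2 b|/s3 b];
    [have H : (T1 `&` T2) p by []|have H : (T1 `&` T3) p by []];
    rewrite ?d12 ?d13 in H.
- by apply: KC_U => //; apply: nrT => -[/s2|/s3].
- exact: K1.
by rewrite setUA.
Qed.

Lemma add_div G x y : homeo_subgroup G -> approximately_full G -> vigorous G ->
  OrbG G x -> OrbG G y -> exists2 z, OrbG G z & addO G x z = y.
Proof.
move=> hG hAF hV [B KB <-] [C KC' <-].
have [cC [nC tC]] := KC'.
have [C1 [c1 s1 n1 [q [Cq nq]]]] := split_clopen cC nC.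
have t1 : C1 <> setT by move=> e; apply: tC; apply/seteqP; split => // p _; apply: s1; rewrite e.
have [g Gg sg] := shrink hV KB c1 n1 t1.
have KB' := sim_KC hG KB (sim_img B hG Gg).
set B' := g @` B in sg KB' *.
have cB' : clopen B' by case: KB'.
have KZ : KC (C `&` ~` B').
  split; first by apply: clopenI2 => //; exact: clopenC2.
  split; first by exists q; split => // /sg.
  move=> e; apply: tC; apply/seteqP; split => // p _.
  have : (C `&` ~` B') p by rewrite e.
  by case.
exists (OG G (C `&` ~` B')); first by exists (C `&` ~` B').
rewrite (OG_sim hG (sim_img B hG Gg)) (addE_id hG hAF hV KB' KZ).
- congr (OG G _); apply/seteqP; split => p.
    by case=> [/sg /s1|[]].
  by move=> Cp; case: (pselect (B' p)) => H; [left|right].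
- by apply: disjP => p Bp [].
- have -> : B' `|` C `&` ~` B' = C; last by [].
  apply/seteqP; split => p.
    by case=> [/sg /s1|[]].
  by move=> Cp; case: (pselect (B' p)) => H; [left|right].
Qed.

Unset Implicit Arguments. Set Strict Implicit.

Theorem proposition3p2 (G : set (cantor_space -> cantor_space)) :
  homeo_subgroup G -> approximately_full G -> vigorous G ->
  exists add : set (set cantor_space) -> set (set cantor_space) -> set (set cantor_space),
    [/\ (* admissible mu, nu always exist *)
        (forall U V, KC U -> KC V -> exists mu nu, admissible G U V mu nu),
        (* the operation is well defined: O_G(U) + O_G(V) = O_G(U mu u V nu)
           for every choice of representatives and admissible mu, nu *)
        (forall U V mu nu, KC U -> KC V -> admissible G U V mu nu ->
           add (OG G U) (OG G V) = OG G (mu @` U `|` nu @` V)) &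
        (* (O(G), +) is an abelian group *)
        [/\ (forall x y, OrbG G x -> OrbG G y -> OrbG G (add x y)),
            (forall x y z, OrbG G x -> OrbG G y -> OrbG G z ->
               add (add x y) z = add x (add y z)),
            (forall x y, OrbG G x -> OrbG G y -> add x y = add y x) &
            exists2 e, OrbG G e &
              forall x, OrbG G x ->
                add e x = x /\ exists2 y, OrbG G y & add x y = e]].
Proof.
move=> hG hAF hV; exists (addO G); split.
- by move=> U V KU KV; exact: adm_exists.
- by move=> U V mu nu KU KV adm; exact: addE.
split.
- by move=> x y; exact: add_closed.
- by move=> x y z; exact: add_assoc.
- by move=> x y; exact: add_comm.
have [T1 [T2 [T3 [[c1 _] [n1 _] _ [r [r1 _]]]]]] := four_split.
have Kx0 : KC T1 by split => //; split => // e; apply: r1; rewrite e.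
have O0 : OrbG G (OG G T1) by exists T1.
have [e Oe He] := add_div hG hAF hV O0 O0.
exists e => // x Ox; split; last exact: add_div hG hAF hV Ox Oe.
have [w Ow Hw] := add_div hG hAF hV O0 Ox.
rewrite -Hw -(add_assoc hG hAF hV Oe O0 Ow).
by rewrite (add_comm hG hAF hV Oe O0) He.
Qed.
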